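(* Let $I$ be a square-free monomial ideal of $S=K[x_1,\ldots,x_n]$ with minimal generating set $G(I)=\bigcup_{i=1}^kG_{d_i}$, where $G_{d_i}$ consists of the generators of degree $d_i$. Then $I$ is an $f$-ideal if and only if: (1) for each positive $l\in\{d_1,\ldots,d_k\}$, $$|G_l|=\tfrac12\Big(C_n^l-\Big|\bigcup_{d_i>l}\sqcap^{d_i-l}(G_{d_i})\Big|-\Big|\bigcup_{d_i<l}\sqcup^{l-d_i}(G_{d_i})\Big|\Big);$$ and (2) for each positive integer $l\notin\{d_1,\ldots,d_k\}$, $$\bigcup_{d_i>l}\sqcap^{d_i-l}(G_{d_i})=sm(S)_l\setminus\bigcup_{d_i<l}\sqcup^{l-d_i}(G_{d_i}).$$
   Context: $K$ is a field; $C_n^l$ is the binomial coefficient; $sm(S)_l$ is the set of square-free monomials of degree $l$. For a set $A$ of square-free monomials, $\sqcup(A)=\{gx_i\mid g\in A,\ x_i\nmid g,\ 1\le i\le n\}$ and $\sqcap(A)=\{h\ne1\mid h=g/x_i \text{ for some } g\in A,\ x_i\mid g\}$; $\sqcup^m$ and $\sqcap^m$ denote $m$-fold iterates. With $\sigma$ the bijection $x_{i_1}\cdots x_{i_k}\mapsto\{i_1,\ldots,i_k\}$, the facet complex $\delta_{\mathcal{F}}(I)$ has facets $\sigma(g)$, $g\in G(I)$, the Stanley–Reisner complex is $\delta_{\mathcal{N}}(I)=\{\sigma(g)\mid g\text{ square-free monomial},\ g\notin I\}$, and $I$ is an $f$-ideal if both complexes have the same $f$-vector. *)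

(* Defs.v *)
From HB Require Import structures.
From mathcomp Require Import all_boot all_order all_algebra.
Set Implicit Arguments. Unset Strict Implicit. Unset Printing Implicit Defensive.

(* Square-free monomials of S = K[x_1,...,x_n] are identified, via the
   bijection sigma of the paper, with subsets of 'I_n (variable x_{i+1}
   <-> index i). *)
Notation sqfmon n := {set 'I_n}.

(* A square-free monomial ideal I is determined by its minimal generating set
   G(I), which is an antichain of square-free monomials (no generator divides
   another); divisibility of square-free monomials is set inclusion. *)
Definition minimal_gens n (G : {set sqfmon n}) : Prop :=
  forall g h, g \in G -> h \in G -> g \subset h -> g = h.

Definition in_ideal n (G : {set sqfmon n}) (g : sqfmon n) : bool :=
  [exists h in G, h \subset g].

Definition Gdeg n (G : {set sqfmon n}) (l : nat) : {set sqfmon n} :=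
  [set g in G | #|g| == l].

Definition is_degree n (G : {set sqfmon n}) (l : nat) : bool :=
  [exists g in G, #|g| == l].

Definition sm n (l : nat) : {set sqfmon n} := [set g : {set 'I_n} | #|g| == l].

(* \sqcup(A) = { g x_i | g in A, x_i does not divide g } *)
Definition sqcup n (A : {set sqfmon n}) : {set sqfmon n} :=
  [set h : {set 'I_n} | [exists g in A, exists i, (i \notin g) && (h == i |: g)]].

(* \sqcap(A) = { h <> 1 | h = g / x_i, g in A, x_i divides g } *)
Definition sqcap n (A : {set sqfmon n}) : {set sqfmon n} :=
  [set h : {set 'I_n} | (h != set0) && [exists g in A, exists i, (i \in g) && (h == g :\ i)]].

(* faces of the facet complex delta_F(I): subsets of some sigma(g), g in G(I) *)
Definition facet_face n (G : {set sqfmon n}) (F : {set 'I_n}) : bool :=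
  [exists g in G, F \subset g].

(* faces of the Stanley-Reisner complex delta_N(I): sigma(g), g not in I *)
Definition sr_face n (G : {set sqfmon n}) (F : {set 'I_n}) : bool :=
  ~~ in_ideal G F.

(* f-vector entry f_{k-1} (number of faces with k vertices), k >= 1 *)
Definition fnum n (P : {set 'I_n} -> bool) (k : nat) : nat :=
  #|[set F : {set 'I_n} | (#|F| == k) && P F]|.

(* I is an f-ideal: delta_F(I) and delta_N(I) have the same f-vector
   (f_0, f_1, ..., i.e. the empty face is not counted) *)
Definition f_ideal n (G : {set sqfmon n}) : Prop :=
  forall k, 0 < k -> fnum (facet_face G) k = fnum (sr_face G) k.

Definition down_union n (G : {set sqfmon n}) (l : nat) : {set sqfmon n} :=
  \bigcup_(d < n.+1 | (l < d) && is_degree G d) iter (d - l) (@sqcap n) (Gdeg G d).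

Definition up_union n (G : {set sqfmon n}) (l : nat) : {set sqfmon n} :=
  \bigcup_(d < n.+1 | (d < l) && is_degree G d) iter (l - d) (@sqcup n) (Gdeg G d).

(* Main.v *)
Require Import Defs.
From HB Require Import structures.
From mathcomp Require Import all_boot all_order all_algebra zify ring.
Import GRing.Theory Num.Theory.
Set Implicit Arguments. Unset Strict Implicit.

Lemma one_step n (h g : {set 'I_n}) : h \subset g -> #|g| = #|h|.+1 ->
  exists i, [/\ i \in g, i \notin h & g = i |: h].
Proof.
move=> hg cg.
have : #|g :\: h| == 1.
  by rewrite cardsD (setIidPr hg) cg subSnn.
case/cards1P=> i gi.
have ig : i \in g :\: h by rewrite gi set11.
move: (ig); rewrite inE => /andP[ih ig'].
exists i; split => //.
apply/eqP; rewrite eq_sym eqEcard cardsU1 ih cg add1n leqnn andbT.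
by rewrite subUset sub1set ig'.
Qed.

Lemma iter_sqcupP n (A : {set {set 'I_n}}) m h :
  (h \in iter m (@sqcup n) A) = [exists g in A, (g \subset h) && (#|h| == #|g| + m)].
Proof.
elim: m h => [|m IH] h /=.
  apply/idP/existsP => [hA|[g /and3P[gA gh /eqP c]]].
    by exists h; rewrite hA subxx addn0 eqxx.
  have -> : h = g by apply/eqP; rewrite eq_sym eqEcard gh c addn0 leqnn.
  done.
rewrite /sqcup inE.
apply/existsP/existsP.
  case=> g' /andP[g'in /existsP[i /andP[ig' /eqP ->]]].
  move: g'in; rewrite IH => /existsP[g /and3P[gA gg' /eqP c]].
  exists g; rewrite gA /= (subset_trans gg' (subsetUr _ _)) /=.
  by rewrite cardsU1 ig' c add1n addnS.
case=> g /and3P[gA gh /eqP c].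
have [i [ih ig ng]] : exists i, [/\ i \in h, i \notin h :\ i & i \notin g].
  have : #|g| < #|h| by rewrite c addnS ltnS leq_addr.
  move=> lt; have : ~~ (h \subset g).
    by apply/negP=> hg; move: (subset_leq_card hg); lia.
  case/subsetPn=> i ih ng; exists i; split => //; by rewrite setD11.
exists (h :\ i); apply/andP; split.
  rewrite IH; apply/existsP; exists g; rewrite gA /=.
  have -> : #|h :\ i| = #|g| + m by move: (cardsD1 i h); rewrite ih add1n c addnS => -[].
  rewrite eqxx andbT; apply/subsetP=> x xg; rewrite !inE (subsetP gh) // andbT.
  by apply/eqP=> e; move: ng; rewrite -e xg.
apply/existsP; exists i; by rewrite ig setD1K ?eqxx.
Qed.

Lemma iter_sqcapP n (A : {set {set 'I_n}}) m h :
  (h \in iter m.+1 (@sqcap n) A) =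
  (h != set0) && [exists g in A, (h \subset g) && (#|g| == #|h| + m.+1)].
Proof.
elim: m h => [|m IH] h.
  rewrite /= /sqcap inE; congr (_ && _).
  apply/existsP/existsP.
    case=> g /andP[gA /existsP[i /andP[ig /eqP ->]]].
    exists g; rewrite gA subD1set /=.
    by rewrite (cardsD1 i g) ig add1n addn1.
  case=> g /and3P[gA hg /eqP c].
  have [i [ig ih gE]] := @one_step _ h g hg (etrans c (addn1 _)).
  exists g; rewrite gA /=; apply/existsP; exists i.
  by rewrite ig /= gE setU1K ?eqxx.
rewrite iterS /sqcap inE; congr (_ && _).
apply/existsP/existsP.
  case=> g' /andP[g'in /existsP[i /andP[ig /eqP ->]]].
  move: g'in; rewrite IH => /andP[_ /existsP[g /and3P[gA g'g /eqP c]]].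
  exists g; rewrite gA /= (subset_trans (subD1set _ _) g'g) /=.
  by rewrite c (cardsD1 i g') ig add1n !addnS addSn.
case=> g /and3P[gA hg /eqP c].
have : ~~ (g \subset h).
  by apply/negP=> gh; move: (subset_leq_card gh); rewrite c; lia.
case/subsetPn=> i ig ih.
exists (i |: h); apply/andP; split.
  rewrite IH; apply/andP; split.
    by apply/set0Pn; exists i; rewrite setU11.
  apply/existsP; exists g; rewrite gA subUset sub1set ig hg /=.
  by rewrite cardsU1 ih c add1n !addnS addSn.
apply/existsP; exists i; by rewrite setU11 setU1K ?eqxx.
Qed.

Lemma card_le_n n (g : {set 'I_n}) : #|g| < n.+1.
Proof. by rewrite ltnS; apply: leq_trans (max_card _) _; rewrite card_ord. Qed.

Lemma downP n (G : {set {set 'I_n}}) l F : 0 < l ->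
  (F \in down_union G l) = (#|F| == l) && [exists g in G, (F \subset g) && (l < #|g|)].
Proof.
move=> l0; rewrite /down_union; apply/bigcupP/andP.
  case=> d /andP[ld _].
  rewrite -(prednK (_ : 0 < d - l)) ?subn_gt0 // iter_sqcapP.
  case/andP=> _ /existsP[g /and3P[]]; rewrite inE => /andP[gG /eqP gd] Fg /eqP c.
  have cF : #|F| = l by move: c; rewrite prednK ?subn_gt0 // gd; lia.
  split; first by rewrite cF.
  by apply/existsP; exists g; rewrite gG Fg gd.
case=> /eqP cF /existsP[g /and3P[gG Fg lg]].
exists (Ordinal (card_le_n g)) => /=.
  by rewrite lg; apply/existsP; exists g; rewrite gG eqxx.
rewrite -(prednK (_ : 0 < #|g| - l)) ?subn_gt0 // iter_sqcapP.
apply/andP; split.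
  by apply/set0Pn; apply/card_gt0P; rewrite cF.
apply/existsP; exists g; rewrite inE gG eqxx Fg /=.
by rewrite prednK ?subn_gt0 // cF subnKC // ltnW.
Qed.

Lemma upP n (G : {set {set 'I_n}}) l F :
  (F \in up_union G l) = (#|F| == l) && [exists g in G, (g \subset F) && (#|g| < l)].
Proof.
rewrite /up_union; apply/bigcupP/andP.
  case=> d /andP[ld _].
  rewrite iter_sqcupP.
  case/existsP=> g /and3P[]; rewrite inE => /andP[gG /eqP gd] gF /eqP c.
  have cF : #|F| = l by move: c; rewrite gd; lia.
  split; first by rewrite cF.
  by apply/existsP; exists g; rewrite gG gF gd.
case=> /eqP cF /existsP[g /and3P[gG gF lg]].
exists (Ordinal (card_le_n g)) => /=.
  by rewrite lg; apply/existsP; exists g; rewrite gG eqxx.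
rewrite iter_sqcupP.
apply/existsP; exists g; rewrite inE gG eqxx gF /=.
by rewrite cF subnKC // ltnW.
Qed.

Section Count.
Variables (n : nat) (G : {set {set 'I_n}}) (l : nat).
Hypothesis mG : minimal_gens G.
Hypothesis l0 : 0 < l.

Lemma facet_eq : [set F : {set 'I_n} | (#|F| == l) && facet_face G F] = Gdeg G l :|: down_union G l.
Proof.
apply/setP=> F; rewrite !inE downP //.
apply/andP/orP.
  case=> /eqP cF /existsP[g /andP[gG Fg]].
  have := subset_leq_card Fg; rewrite leq_eqVlt => /orP[/eqP e|lt].
    left; have -> : F = g by apply/eqP; rewrite eqEcard Fg e leqnn.
    by rewrite gG -cF -e eqxx.
  right; rewrite cF eqxx; apply/existsP; exists g; by rewrite gG Fg -cF.
case=> [/andP[FG cF]|/andP[cF /existsP[g /and3P[gG Fg _]]]].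
  by split => //; apply/existsP; exists F; rewrite FG subxx.
by split => //; apply/existsP; exists g; rewrite gG Fg.
Qed.

Lemma sr_eq : [set F : {set 'I_n} | (#|F| == l) && sr_face G F] = sm n l :\: (Gdeg G l :|: up_union G l).
Proof.
apply/setP=> F; rewrite !inE upP /sr_face /in_ideal.
case cF: (#|F| == l); rewrite ?andbF ?andbT //=; congr (~~ _).
apply/existsP/orP.
  case=> g /andP[gG gF].
  have := subset_leq_card gF; rewrite leq_eqVlt => /orP[/eqP e|lt].
    left; have <- : g = F by apply/eqP; rewrite eqEcard gF e leqnn.
    by rewrite gG.
  right; apply/existsP; exists g; by rewrite gG gF -(eqP cF).
case=> [FG|/existsP[g /and3P[gG gF _]]].
  by exists F; rewrite FG subxx.
by exists g; rewrite gG gF.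
Qed.

Lemma down_sub : down_union G l \subset sm n l :\: (Gdeg G l :|: up_union G l).
Proof.
apply/subsetP=> F; rewrite downP // !inE upP => /andP[cF /existsP[g /and3P[gG Fg lg]]].
rewrite cF andbT /= negb_or; apply/andP; split.
  apply/negP=> /andP[FG _].
  have e := mG FG gG Fg; move: lg; rewrite -e (eqP cF) ltnn //.
apply/negP=> /existsP[h /and3P[hG hF hl]].
have e := mG hG gG (subset_trans hF Fg).
move: (subset_leq_card hF); rewrite e (eqP cF); move: lg hl; lia.
Qed.

Lemma GU_sub : Gdeg G l :|: up_union G l \subset sm n l.
Proof.
apply/subsetP=> F; rewrite !inE upP; case/orP=> /andP[]; first by move=> _ ->.
by move=> ->.
Qed.

Lemma GU_card : #|Gdeg G l :|: up_union G l| = #|Gdeg G l| + #|up_union G l|.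
Proof.
rewrite cardsU; suff -> : Gdeg G l :&: up_union G l = set0 by rewrite cards0 subn0.
apply/setP=> F; rewrite !inE upP; apply/negP => /and3P[/andP[FG /eqP cF] _ /existsP[g /and3P[gG gF gl]]].
have e := mG gG FG gF; move: gl; rewrite e cF ltnn //.
Qed.

Lemma GD_card : #|Gdeg G l :|: down_union G l| = #|Gdeg G l| + #|down_union G l|.
Proof.
rewrite cardsU; suff -> : Gdeg G l :&: down_union G l = set0 by rewrite cards0 subn0.
apply/setP=> F; rewrite !inE downP //; apply/negP => /and3P[/andP[FG /eqP cF] _ /existsP[g /and3P[gG Fg gl]]].
have e := mG FG gG Fg; move: gl; rewrite -e cF ltnn //.
Qed.

Lemma sm_card : #|sm n l| = 'C(n, l).
Proof. by rewrite /sm card_draws card_ord. Qed.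

Lemma fnum_facet : fnum (facet_face G) l = #|Gdeg G l| + #|down_union G l|.
Proof. by rewrite /fnum facet_eq GD_card. Qed.

Lemma fnum_sr : fnum (sr_face G) l = 'C(n, l) - (#|Gdeg G l| + #|up_union G l|).
Proof. by rewrite /fnum sr_eq cardsD (setIidPr GU_sub) sm_card GU_card. Qed.

Lemma bound1 : #|Gdeg G l| + #|up_union G l| <= 'C(n, l).
Proof. by rewrite -GU_card -sm_card subset_leq_card // GU_sub. Qed.

Lemma bound2 : #|down_union G l| <= 'C(n, l) - (#|Gdeg G l| + #|up_union G l|).
Proof. by rewrite -fnum_sr /fnum sr_eq subset_leq_card // down_sub. Qed.

End Count.

Lemma rat_iff (a b c C : nat) : a + b + c <= C ->
  ((a%:R : rat) = (2%:R^-1 * (C%:R - b%:R - c%:R))%R) <-> a + b = C - (a + c).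
Proof.
move=> le; split.
  move=> e.
  have : (((a + a + b + c)%:R : rat) = C%:R)%R.
    by rewrite !natrD e; field.
  move/eqP; rewrite eqr_nat => /eqP; lia.
move=> e; have -> : C = a + a + b + c by lia.
by rewrite !natrD; field.
Qed.

Lemma Gdeg0 n (G : {set {set 'I_n}}) l : ~~ is_degree G l -> Gdeg G l = set0.
Proof.
move=> nd; apply/setP=> g; rewrite !inE; apply/negP=> /andP[gG gl].
by move/negP: nd; apply; apply/existsP; exists g; rewrite gG.
Qed.

Theorem proposition6p1 (n : nat) (G : {set {set 'I_n}}) :
  minimal_gens G ->
  (f_ideal G <->
   ((forall l : nat, 0 < l -> is_degree G l ->
       (#|Gdeg G l|%:R : rat)
       = (2%:R^-1 * ('C(n, l)%:R - #|down_union G l|%:R - #|up_union G l|%:R))%R)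
    /\
    (forall l : nat, 0 < l -> ~~ is_degree G l ->
       down_union G l = sm n l :\: up_union G l))).
Proof.
move=> mG; split.
  move=> fI; split.
    move=> l l0 _; have E := fI l l0.
    rewrite (@fnum_facet _ G l mG l0) (@fnum_sr _ G l mG) in E.
    have B1 := bound1 l mG; have B2 := @bound2 _ G l mG l0.
    apply/rat_iff => //; lia.
  move=> l l0 nd; have E := fI l l0.
  rewrite (@fnum_facet _ G l mG l0) (@fnum_sr _ G l mG) Gdeg0 // cards0 !add0n in E.
  have D := @down_sub _ G l mG l0; rewrite Gdeg0 // set0U in D.
  have U := GU_sub G l; rewrite Gdeg0 // set0U in U.
  apply/eqP; rewrite eqEcard D /= cardsD (setIidPr U) sm_card E.
  by [].
case=> H1 H2 k k0.
rewrite (@fnum_facet _ G k mG k0) (@fnum_sr _ G k mG).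
have B1 := bound1 k mG; have B2 := @bound2 _ G k mG k0.
case: (boolP (is_degree G k)) => dk.
  have L : #|Gdeg G k| + #|down_union G k| + #|up_union G k| <= 'C(n, k) by lia.
  exact: (rat_iff L).1 (H1 k k0 dk).
have E := H2 k k0 dk.
have U := GU_sub G k; rewrite Gdeg0 // set0U in U.
rewrite Gdeg0 // cards0 !add0n E cardsD (setIidPr U) sm_card //.
Qed.
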